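(* Let $\mathbf{F}_x,\mathbf{F}_y\in\mathbb{R}^{N\times N}$ be symmetric and negative semi-definite, and let $\Delta t>0$ be arbitrary. Let $\mathbf{U}^n=\mathbf{V}^{x,n}\mathbf{S}^n(\mathbf{V}^{y,n})^T$ with $\mathbf{V}^{x,n},\mathbf{V}^{y,n}\in\mathbb{R}^{N\times r^n}$ having orthonormal columns, and let $\mathbf{U}^{n+1}=\mathbf{V}^{x,n+1}\mathbf{S}^{n+1}(\mathbf{V}^{y,n+1})^T$ be produced from $\mathbf{U}^n$ by one step of the first-order RAIL scheme (described in the context) for the matrix differential equation $\frac{d\mathbf{U}}{dt}=\mathbf{F}_x\mathbf{U}+\mathbf{U}\mathbf{F}_y^T$. Then $\|\mathbf{U}^{n+1}\|_F\le\|\mathbf{U}^n\|_F$, i.e. the first-order RAIL scheme (based on backward Euler) is unconditionally stable in $L^2$ (equivalently, in the Frobenius norm of the solution matrix).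
   Context: The first-order RAIL (Reduced Augmentation Implicit Low-rank) scheme, based on the backward Euler discretization $\mathbf{U}^{n+1}=\mathbf{U}^n+\Delta t(\mathbf{F}_x\mathbf{U}^{n+1}+\mathbf{U}^{n+1}\mathbf{F}_y^T)$, computes $\mathbf{U}^{n+1}$ from $\mathbf{U}^n=\mathbf{V}^{x,n}\mathbf{S}^n(\mathbf{V}^{y,n})^T$ as follows. (1) K and L steps: solve the Sylvester equations $(\mathbf{I}-\Delta t\mathbf{F}_x)\mathbf{K}-\mathbf{K}\big(\Delta t(\mathbf{F}_y\mathbf{V}^{y,n})^T\mathbf{V}^{y,n}\big)=\mathbf{V}^{x,n}\mathbf{S}^n$ and $(\mathbf{I}-\Delta t\mathbf{F}_y)\mathbf{L}-\mathbf{L}\big(\Delta t(\mathbf{F}_x\mathbf{V}^{x,n})^T\mathbf{V}^{x,n}\big)=\mathbf{V}^{y,n}(\mathbf{S}^n)^T$ for $\mathbf{K},\mathbf{L}\in\mathbb{R}^{N\times r^n}$, and let $\mathbf{V}^{x}_{\ddagger},\mathbf{V}^{y}_{\ddagger}$ be the orthonormal factors of reduced QR factorizations $\mathbf{K}=\mathbf{V}^{x}_{\ddagger}\mathbf{R}$, $\mathbf{L}=\mathbf{V}^{y}_{\ddagger}\mathbf{R}'$. (2) Reduced augmentation: compute reduced QR factorizations $[\mathbf{V}^{x}_{\ddagger},\mathbf{V}^{x,n}]=\mathbf{Q}_x\mathbf{R}_x$ and $[\mathbf{V}^{y}_{\ddagger},\mathbf{V}^{y,n}]=\mathbf{Q}_y\mathbf{R}_y$;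 let $\hat r$ be the maximum of the numbers of singular values of $\mathbf{R}_x$ and of $\mathbf{R}_y$ exceeding $10^{-12}$; set $\hat{\mathbf{V}}^{x}=\mathbf{Q}_x$ times the first $\hat r$ left singular vectors of $\mathbf{R}_x$, and $\hat{\mathbf{V}}^{y}=\mathbf{Q}_y$ times the first $\hat r$ left singular vectors of $\mathbf{R}_y$ (both have orthonormal columns). (3) S step (Galerkin projection): solve the Sylvester equation $\big(\mathbf{I}-\Delta t(\hat{\mathbf{V}}^{x})^T\mathbf{F}_x\hat{\mathbf{V}}^{x}\big)\hat{\mathbf{S}}-\hat{\mathbf{S}}\big(\Delta t(\mathbf{F}_y\hat{\mathbf{V}}^{y})^T\hat{\mathbf{V}}^{y}\big)=(\hat{\mathbf{V}}^{x})^T\mathbf{V}^{x,n}\mathbf{S}^n(\mathbf{V}^{y,n})^T\hat{\mathbf{V}}^{y}$ for $\hat{\mathbf{S}}\in\mathbb{R}^{\hat r\times\hat r}$. (4) Truncation: compute the SVD $\hat{\mathbf{S}}=\mathbf{A}\boldsymbol{\Sigma}\mathbf{B}^T$, let $r^{n+1}$ be the number of singular values larger than a tolerance $\epsilon>0$, and set $\mathbf{V}^{x,n+1}=\hat{\mathbf{V}}^{x}\mathbf{A}(:,1\!:\!r^{n+1})$, $\mathbf{S}^{n+1}=\boldsymbol{\Sigma}(1\!:\!r^{n+1},1\!:\!r^{n+1})$, $\mathbf{V}^{y,n+1}=\hat{\mathbf{V}}^{y}\mathbf{B}(:,1\!:\!r^{n+1})$. Here $\|\cdot\|_F$ is the Frobenius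 norm. *)

(* Defs.v *)
From HB Require Import structures.
From mathcomp Require Import all_boot all_order all_algebra.
Set Implicit Arguments. Unset Strict Implicit. Unset Printing Implicit Defensive.
Import Order.TTheory GRing.Theory Num.Theory.
Local Open Scope ring_scope.

Section RAILDefs.
Variable R : rcfType.

Definition orthonormal_cols m n (V : 'M[R]_(m, n)) : Prop := V^T *m V = 1%:M.

Definition upper_tri m n (A : 'M[R]_(m, n)) : Prop :=
  forall (i : 'I_m) (j : 'I_n), (j < i)%N -> A i j = 0.

Definition is_reduced_QR m n p (A : 'M[R]_(m, n)) (Q : 'M[R]_(m, p)) (Rf : 'M[R]_(p, n)) : Prop :=
  orthonormal_cols Q /\ upper_tri Rf /\ A = Q *m Rf.

Definition svd_diag m n (s : nat -> R) : 'M[R]_(m, n) :=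
  \matrix_(i < m, j < n) (if val i == val j then s (val i) else 0).

(* full SVD  A = U Sigma W^T, singular values s 0 >= s 1 >= ... >= 0
   (the minn m n first values of s are the singular values) *)
Definition is_svd m n (A : 'M[R]_(m, n)) (U : 'M[R]_m) (s : nat -> R) (W : 'M[R]_n) : Prop :=
  [/\ orthonormal_cols U, orthonormal_cols W,
      (forall k, (k < minn m n)%N -> 0 <= s k),
      (forall k l, (k <= l)%N -> (l < minn m n)%N -> s l <= s k)
    & A = U *m svd_diag m n s *m W^T].

Definition num_sv_gt m n (s : nat -> R) (tol : R) : nat :=
  count (fun k => tol < s k) (iota 0 (minn m n)).

(* first k columns of A (meaningful when k <= n) *)
Definition firstcols m n k (A : 'M[R]_(m, n)) : 'M[R]_(m, k) :=
  \matrix_(i < m, j < k)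
    (if (insub (val j) : option 'I_n) is Some j' then A i j' else 0).

Definition frob m n (A : 'M[R]_(m, n)) : R :=
  Num.sqrt (\sum_(i < m) \sum_(j < n) A i j ^+ 2).

Definition sym_nsd N (F : 'M[R]_N) : Prop :=
  F^T = F /\ forall v : 'cV[R]_N, (v^T *m F *m v) 0 0 <= 0.

End RAILDefs.

(* Main.v *)
Require Import Defs.
From HB Require Import structures.
From mathcomp Require Import all_boot all_order all_algebra.
From mathcomp Require Import lra.
Import Order.TTheory GRing.Theory Num.Theory.
Local Open Scope ring_scope.
Set Implicit Arguments. Unset Strict Implicit.

Section H.
Variable R : rcfType.

Definition ip m n (X Y : 'M[R]_(m, n)) : R := \tr (X^T *m Y).

Lemma ip_sum m n (X : 'M[R]_(m, n)) :
  ip X X = \sum_(i < m) \sum_(j < n) X i j ^+ 2.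
Proof.
rewrite /ip /mxtrace exchange_big /=; apply: eq_bigr => j _.
rewrite mxE; apply: eq_bigr => i _; by rewrite !mxE expr2.
Qed.

Lemma ip_ge0 m n (X : 'M[R]_(m, n)) : 0 <= ip X X.
Proof. rewrite ip_sum; apply: sumr_ge0 => i _; apply: sumr_ge0 => j _; exact: sqr_ge0. Qed.

Lemma frobE m n (X : 'M[R]_(m, n)) : frob X = Num.sqrt (ip X X).
Proof. by rewrite ip_sum. Qed.

Lemma ipC m n (X Y : 'M[R]_(m, n)) : ip X Y = ip Y X.
Proof. by rewrite /ip -mxtrace_tr trmx_mul trmxK. Qed.

Lemma ip_tr m n (X : 'M[R]_(m, n)) : ip X^T X^T = ip X X.
Proof. by rewrite /ip trmxK mxtrace_mulC. Qed.

Lemma ip_orthl m k n (P : 'M[R]_(m, k)) (X : 'M[R]_(k, n)) :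
  orthonormal_cols P -> ip (P *m X) (P *m X) = ip X X.
Proof. move=> hP; by rewrite /ip trmx_mul -mulmxA (mulmxA P^T) hP mul1mx. Qed.

Lemma ip_orthr m k n (Q : 'M[R]_(n, k)) (X : 'M[R]_(m, k)) :
  orthonormal_cols Q -> ip (X *m Q^T) (X *m Q^T) = ip X X.
Proof.
move=> hQ; rewrite -ip_tr trmx_mul trmxK ip_orthl // ip_tr //.
Qed.

Lemma ip_contr m k n (P : 'M[R]_(m, k)) (X : 'M[R]_(m, n)) :
  orthonormal_cols P -> ip (P^T *m X) (P^T *m X) <= ip X X.
Proof.
move=> hP.
have E : ip X X - ip (P^T *m X) (P^T *m X)
   = ip ((1%:M - P *m P^T) *m X) ((1%:M - P *m P^T) *m X).
  have H1 : (1%:M - P *m P^T)^T *m (1%:M - P *m P^T) = 1%:M - P *m P^T.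
    have Ht : (1%:M - P *m P^T)^T = 1%:M - P *m P^T.
      apply/matrixP => a b; rewrite !mxE; congr (_ - _); first by rewrite eq_sym.
      by apply: eq_bigr => l _; rewrite !mxE mulrC.
    rewrite Ht mulmxBl mul1mx mulmxBr mulmx1.
    by rewrite mulmxA -(mulmxA P) hP mulmx1 subrr subr0.
  rewrite /ip [((_ - _) *m X)^T]trmx_mul -mulmxA (mulmxA _ (_ - _) X) H1 mulmxBl mul1mx mulmxBr.
  by rewrite trmx_mul trmxK !mulmxA linearB.
by rewrite -subr_ge0 E ip_ge0.
Qed.

Lemma ip_contr_r m k n (Q : 'M[R]_(n, k)) (X : 'M[R]_(m, n)) :
  orthonormal_cols Q -> ip (X *m Q) (X *m Q) <= ip X X.
Proof.
move=> hQ; rewrite -ip_tr trmx_mul -[X in _ <= X]ip_tr; exact: ip_contr.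
Qed.

Lemma nsd_tr N k (F : 'M[R]_N) (Y : 'M[R]_(N, k)) :
  sym_nsd F -> \tr (Y^T *m F *m Y) <= 0.
Proof.
move=> [_ hF]; rewrite /mxtrace; apply: sumr_le0 => j _.
have -> : (Y^T *m F *m Y) j j = ((col j Y)^T *m F *m col j Y) 0 0.
  rewrite !mxE; apply: eq_bigr => i _; rewrite !mxE; congr (_ * _).
  apply: eq_bigr => l _; by rewrite !mxE.
exact: hF.
Qed.

Lemma firstcolsE m n k (A : 'M[R]_(m, n)) (H : (k <= n)%N) i j :
  firstcols k A i j = A i (widen_ord H j).
Proof.
rewrite mxE; case: insubP => [j' _ Hj|]; last by rewrite /= (leq_trans (ltn_ord j) H).
by congr (A i _); apply: val_inj; rewrite Hj.
Qed.

Lemma firstcols_orth n k (A : 'M[R]_(n, n)) :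
  (k <= n)%N -> orthonormal_cols A -> orthonormal_cols (firstcols k A).
Proof.
move=> H hA.
have -> : firstcols k A = \matrix_(a, b) A a (widen_ord H b).
  by apply/matrixP => a b; rewrite firstcolsE mxE.
apply/matrixP => i j.
have := congr1 (fun M : 'M[R]_n => M (widen_ord H i) (widen_ord H j)) hA.
rewrite !mxE /= => E; rewrite -E.
by apply: eq_bigr => l _; rewrite !mxE.
Qed.

Lemma orth_mul m k p (P : 'M[R]_(m, k)) (C : 'M[R]_(k, p)) :
  orthonormal_cols P -> orthonormal_cols C -> orthonormal_cols (P *m C).
Proof.
by move=> hP hC; rewrite /orthonormal_cols trmx_mul -mulmxA (mulmxA P^T) hP mul1mx.
Qed.

Lemma ip_diag n (s : nat -> R) :
  ip (svd_diag n n s) (svd_diag n n s) = \sum_(0 <= i < n) s i ^+ 2.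
Proof.
rewrite ip_sum big_mkord; apply: eq_bigr => i _.
rewrite (bigD1 i) //= big1 ?addr0; first by rewrite mxE eqxx.
move=> j hj; rewrite mxE; case: eqP => [/val_inj E|]; last by rewrite expr0n.
by rewrite E eqxx in hj.
Qed.


Lemma ip_expand m n (X Y : 'M[R]_(m, n)) :
  ip (Y - X) (Y - X) = ip Y Y - (ip X Y + ip X Y) + ip X X.
Proof.
have Ht : (Y - X)^T = Y^T - X^T by apply/matrixP => a b; rewrite !mxE.
rewrite /ip Ht mulmxBl !mulmxBr !linearB /=.
have -> : \tr (Y^T *m X) = \tr (X^T *m Y) by rewrite -mxtrace_tr trmx_mul trmxK.
lra.
Qed.

End H.

Theorem mainTheorem1 (R : rcfType) (N r : nat)
  (Fx Fy : 'M[R]_N) (dt : R)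
  (Vxn Vyn : 'M[R]_(N, r)) (Sn : 'M[R]_r)
  (* (1) K and L steps *)
  (K L Vxd Vyd : 'M[R]_(N, r)) (RK RL : 'M[R]_r)
  (* (2) reduced augmentation *)
  (Qx Qy : 'M[R]_(N, minn N (r + r))) (Rx Ry : 'M[R]_(minn N (r + r), r + r))
  (Ux Uy : 'M[R]_(minn N (r + r))) (sx sy : nat -> R) (Wx Wy : 'M[R]_(r + r))
  (rh : nat) (Vxh Vyh : 'M[R]_(N, rh))
  (* (3) S step *)
  (Sh : 'M[R]_rh)
  (* (4) truncation *)
  (eps : R) (A B : 'M[R]_rh) (sS : nat -> R) (r1 : nat)
  (Vx1 Vy1 : 'M[R]_(N, r1)) (S1 : 'M[R]_r1) :
  sym_nsd Fx -> sym_nsd Fy -> 0 < dt ->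
  orthonormal_cols Vxn -> orthonormal_cols Vyn ->
  (1%:M - dt *: Fx) *m K - K *m (dt *: ((Fy *m Vyn)^T *m Vyn)) = Vxn *m Sn ->
  (1%:M - dt *: Fy) *m L - L *m (dt *: ((Fx *m Vxn)^T *m Vxn)) = Vyn *m Sn^T ->
  is_reduced_QR K Vxd RK -> is_reduced_QR L Vyd RL ->
  is_reduced_QR (row_mx Vxd Vxn) Qx Rx -> is_reduced_QR (row_mx Vyd Vyn) Qy Ry ->
  is_svd Rx Ux sx Wx -> is_svd Ry Uy sy Wy ->
  rh = maxn (num_sv_gt (minn N (r + r)) (r + r) sx (10%:R ^- 12))
            (num_sv_gt (minn N (r + r)) (r + r) sy (10%:R ^- 12)) ->
  Vxh = Qx *m firstcols rh Ux -> Vyh = Qy *m firstcols rh Uy ->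
  (1%:M - dt *: (Vxh^T *m Fx *m Vxh)) *m Sh - Sh *m (dt *: ((Fy *m Vyh)^T *m Vyh))
    = Vxh^T *m Vxn *m Sn *m Vyn^T *m Vyh ->
  0 < eps -> is_svd Sh A sS B ->
  r1 = num_sv_gt rh rh sS eps ->
  Vx1 = Vxh *m firstcols r1 A -> S1 = svd_diag r1 r1 sS -> Vy1 = Vyh *m firstcols r1 B ->
  frob (Vx1 *m S1 *m Vy1^T) <= frob (Vxn *m Sn *m Vyn^T).
Proof.
move=> hFx hFy hdt hVxn hVyn _ _ _ _ [hQx _] [hQy _] [hUx _ _ _ _] [hUy _ _ _ _] hrh
  -> -> hS _ [hA hB _ _ hSh] hr1 -> -> ->.
set P := Qx *m firstcols rh Ux.
set Q := Qy *m firstcols rh Uy.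
have rhle : (rh <= minn N (r + r))%N.
  rewrite hrh geq_max /num_sv_gt; apply/andP; split;
  (apply: leq_trans (count_size _ _) _; rewrite size_iota; exact: geq_minl).
have hP : orthonormal_cols P by apply: orth_mul => //; exact: firstcols_orth.
have hQ : orthonormal_cols Q by apply: orth_mul => //; exact: firstcols_orth.
have r1le : (r1 <= rh)%N.
  by rewrite hr1 /num_sv_gt; apply: leq_trans (count_size _ _) _; rewrite size_iota minnn.
set U := Vxn *m Sn *m Vyn^T.
set M := P^T *m Vxn *m Sn *m Vyn^T *m Q.
have hM : M = P^T *m (U *m Q) by rewrite /M /U !mulmxA.
have hMU : ip M M <= ip U U.
  rewrite hM; apply: le_trans (ip_contr _ hP) _; exact: ip_contr_r.
have a_le : \tr (Sh^T *m (P^T *m Fx *m P) *m Sh) <= 0.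
  have -> : Sh^T *m (P^T *m Fx *m P) *m Sh = (P *m Sh)^T *m Fx *m (P *m Sh)
    by rewrite [(P *m Sh)^T]trmx_mul !mulmxA.
  exact: nsd_tr.
have b_le : \tr (Sh^T *m Sh *m ((Fy *m Q)^T *m Q)) <= 0.
  case: (hFy) => hFyT _.
  have -> : \tr (Sh^T *m Sh *m ((Fy *m Q)^T *m Q))
     = \tr ((Q *m Sh^T)^T *m Fy *m (Q *m Sh^T)).
    rewrite [(Q *m Sh^T)^T]trmx_mul trmxK [(Fy *m Q)^T]trmx_mul hFyT !mulmxA.
    by rewrite [RHS]mxtrace_mulC !mulmxA.
  exact: nsd_tr.
have hip : ip Sh M = ip Sh Sh - dt * \tr (Sh^T *m (P^T *m Fx *m P) *m Sh)
                    - dt * \tr (Sh^T *m Sh *m ((Fy *m Q)^T *m Q)).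
  rewrite /M -hS /ip mulmxBl mul1mx !mulmxBr -scalemxAl -scalemxAr.
  rewrite -!scalemxAr !linearB !linearZ /= !mulmxA //.
have hSM : ip Sh Sh <= ip M M.
  have := ip_expand Sh M; have := ip_ge0 (M - Sh).
  have : 0 <= dt * - \tr (Sh^T *m (P^T *m Fx *m P) *m Sh).
    by apply: mulr_ge0; [exact: ltW | rewrite oppr_ge0].
  have : 0 <= dt * - \tr (Sh^T *m Sh *m ((Fy *m Q)^T *m Q)).
    by apply: mulr_ge0; [exact: ltW | rewrite oppr_ge0].
  rewrite hip; lra.
set D := svd_diag rh rh sS.
have hShD : ip Sh Sh = ip D D.
  by rewrite hSh -mulmxA ip_orthl // ip_orthr.
have hfin : ip (P *m firstcols r1 A *m svd_diag r1 r1 sS *m (Q *m firstcols r1 B)^T)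
              (P *m firstcols r1 A *m svd_diag r1 r1 sS *m (Q *m firstcols r1 B)^T)
          = ip (svd_diag r1 r1 sS) (svd_diag r1 r1 sS).
  rewrite -mulmxA ip_orthl ?ip_orthr //; (try apply: orth_mul => //);
  exact: firstcols_orth.
have hDD : ip (svd_diag r1 r1 sS) (svd_diag r1 r1 sS) <= ip D D.
  rewrite !ip_diag [X in _ <= X](@big_cat_nat _ _ _ r1) //= lerDl.
  apply: sumr_ge0 => i _; exact: sqr_ge0.
rewrite !frobE ler_sqrt; last exact: ip_ge0.
rewrite hfin. apply: (le_trans hDD). rewrite -hShD. apply: (le_trans hSM). exact: hMU.
Qed.
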